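(* Let $C'=\{0000,0222,0444,2024,2240,2402,4042,4204,4420\}\subseteq\mathbb Z_6^4$ and $C''=\{3333+c: c\in C'\}$ (addition in $\mathbb Z_6^4$). Then $C'\cup C''$ is a code of size $18$ with minimum Lee distance at least $6$, and every code $C\subseteq\mathbb Z_6^4$ with $|C|=18$ and minimum Lee distance at least $6$ is Lee equivalent to $C'\cup C''$.
   Context: For $u,v\in\mathbb Z_q^n$ (entries viewed as integers in $\{0,\dots,q-1\}$) the Lee distance is $d_L(u,v)=\sum_{i=1}^n\min\{|u_i-v_i|,\,q-|u_i-v_i|\}$; the minimum Lee distance of a code is the minimum of $d_L$ over distinct codewords. Let $D_q$ be the dihedral group of order $2q$ acting on $\mathbb Z_q$ by $x\mapsto\pm x+c$; $D_q^n\rtimes S_n$ acts on $\mathbb Z_q^n$ coordinatewise by $D_q$ and by permuting coordinates. Two codes $C,D\subseteq\mathbb Z_q^n$ are Lee equivalent if $g\cdot C=D$ for some $g\in D_q^n\rtimes S_n$. *)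

(* Defs.v *)
From mathcomp Require Import all_boot all_algebra all_fingroup.
Set Implicit Arguments. Unset Strict Implicit. Unset Printing Implicit Defensive.
Import GRing.Theory.
Local Open Scope ring_scope.

(* Words of length n over Z_q (intended q >= 2, where 'Z_q = 'I_q). *)
Definition word (q n : nat) := {ffun 'I_n -> 'Z_q}.

Definition lee1 (q : nat) (x y : 'Z_q) : nat :=
  let d := if (val x <= val y)%N then (val y - val x)%N else (val x - val y)%N in
  minn d (q - d).

Definition lee_dist (q n : nat) (u v : word q n) : nat :=
  (\sum_(i < n) lee1 (u i) (v i))%N.

(* Minimum Lee distance at least d (for codes with >= 2 words this is
   exactly "min over distinct pairs >= d"). *)
Definition min_lee_ge (q n : nat) (C : {set word q n}) (d : nat) : Prop :=
  forall u v, u \in C -> v \in C -> u != v -> (d <= lee_dist u v)%N.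

(* Action of g = ((eps_i, c_i)_i, s) in D_q^n x| S_n:
   coordinates are permuted by s, then each coordinate is acted on by
   x |-> +-x + c. *)
Definition lee_act (q n : nat) (s : {perm 'I_n}) (e : {ffun 'I_n -> bool})
  (c : {ffun 'I_n -> 'Z_q}) (u : word q n) : word q n :=
  [ffun i => (if e i then - u (s i) else u (s i)) + c i].

Definition lee_equiv (q n : nat) (C D : {set word q n}) : Prop :=
  exists (s : {perm 'I_n}) (e : {ffun 'I_n -> bool}) (c : {ffun 'I_n -> 'Z_q}),
    [set lee_act s e c u | u in C] = D.

Definition w4 (a b c d : nat) : word 6 4 :=
  [ffun i : 'I_4 => inZp (nth 0%N [:: a; b; c; d] i) : 'Z_6].

Definition Cp : {set word 6 4} :=
  [set w4 0 0 0 0; w4 0 2 2 2; w4 0 4 4 4; w4 2 0 2 4; w4 2 2 4 0;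
       w4 2 4 0 2; w4 4 0 4 2; w4 4 2 0 4; w4 4 4 2 0].

Definition Cpp : {set word 6 4} :=
  [set [ffun i => w4 3 3 3 3 i + c i] | c : word 6 4 in Cp].

Definition C0 : {set word 6 4} := Cp :|: Cpp.

(* Main.v *)
Require Import Defs.
From mathcomp Require Import all_boot all_algebra all_fingroup.
From mathcomp Require Import zify.
Set Implicit Arguments. Unset Strict Implicit. Unset Printing Implicit Defensive.
Import GRing.Theory.

Definition nw := (nat * nat * nat * nat)%type.
Definition l1n (a b : nat) : nat :=
  let d := if (a <= b)%N then (b - a)%N else (a - b)%N in minn d (6 - d).
Definition ld (x y : nw) : nat :=
  let: (a,b,c,d) := x in let: (a',b',c',d') := y in
  (l1n a a' + (l1n b b' + (l1n c c' + l1n d d')))%N.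
Definition rr (x y : nw) : bool := (6 <= ld x y)%N.
Definition allw : seq nw :=
  flatten (map (fun a => flatten (map (fun b => flatten (map (fun c =>
    map (fun d => (a,b,c,d)) (iota 0 6)) (iota 0 6))) (iota 0 6))) (iota 0 6)).
Arguments allw : simpl never.
Definition bnd (x : nw) : bool := let: (a,b,c,d) := x in [&& a < 6, b < 6, c < 6 & d < 6]%N.
Definition toW (x : nw) : word 6 4 := let: (a,b,c,d) := x in w4 a b c d.
Definition tol (x : nw) : seq nat := let: (a,b,c,d) := x in [:: a; b; c; d].
Definition ofW (u : word 6 4) : nw :=
  (val (u (inord 0)), val (u (inord 1)), val (u (inord 2)), val (u (inord 3))).

Lemma allw_bnd x : (x \in allw) = bnd x.
Proof.
apply/idP/idP.
  have H : all bnd allw by vm_compute.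
  by move/(allP H).
case: x => [[[a b] c] d] /and4P [Ha Hb Hc Hd].
apply/flatten_mapP; exists a; first by rewrite mem_iota.
apply/flatten_mapP; exists b; first by rewrite mem_iota.
apply/flatten_mapP; exists c; first by rewrite mem_iota.
by apply/mapP; exists d; first by rewrite mem_iota.
Qed.

Lemma toWE x i : toW x i = inZp (nth 0%N (tol x) i).
Proof. by case: x => [[[a b] c] d]; rewrite ffunE. Qed.

Lemma valZ6 a : val (inZp a : 'Z_6) = (a %% 6)%N.
Proof. by []. Qed.

Lemma ld_ok x y : bnd x -> bnd y -> lee_dist (toW x) (toW y) = ld x y.
Proof.
case: x => [[[a b] c] d] /and4P [Ha Hb Hc Hd].
case: y => [[[a' b'] c'] d'] /and4P [Ha' Hb' Hc' Hd'].
rewrite /lee_dist !big_ord_recl big_ord0 addn0 !toWE /lee1 !valZ6 /=.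
by rewrite !modn_small.
Qed.

Lemma ofWK x : bnd x -> ofW (toW x) = x.
Proof.
case: x => [[[a b] c] d] /and4P [Ha Hb Hc Hd].
by rewrite /ofW !toWE !inordK //= !modn_small.
Qed.

Lemma toWK u : toW (ofW u) = u.
Proof.
apply/ffunP => i; rewrite toWE.
case: i => [[|[|[|[|//]]]] Hi] /=;
  rewrite valZpK; congr (u _); apply/val_inj; rewrite /= inordK //.
Qed.

Lemma ofW_bnd u : bnd (ofW u).
Proof. by rewrite /bnd /ofW /= !ltn_ord. Qed.

Lemma toW_inj x y : bnd x -> bnd y -> toW x = toW y -> x = y.
Proof. by move=> Hx Hy E; rewrite -(ofWK Hx) -(ofWK Hy) E. Qed.

Lemma lee1_tr (x y a : 'Z_6) : lee1 (x - a)%R (y - a)%R = lee1 x y.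
Proof.
have H : all (fun i => all (fun j => all (fun k =>
   lee1 (inZp i - inZp k : 'Z_6)%R (inZp j - inZp k : 'Z_6)%R == lee1 (inZp i : 'Z_6) (inZp j))
   (iota 0 6)) (iota 0 6)) (iota 0 6) by vm_compute.
have mi (t : 'Z_6) : (val t \in iota 0 6) by rewrite mem_iota ltn_ord.
move/allP: H => /(_ _ (mi x)) /allP /(_ _ (mi y)) /allP /(_ _ (mi a)) /eqP.
by rewrite !valZpK.
Qed.

Lemma negZ a : (a < 6)%N -> (- (inZp a : 'Z_6))%R = inZp ((6 - a) %% 6).
Proof. move=> Ha; apply/val_inj => /=; change (Zp_trunc 6).+2 with 6%N. by rewrite (modn_small Ha) modn_mod. Qed.

Lemma addZ a b : ((inZp a : 'Z_6) + inZp b)%R = inZp (a + b).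
Proof. apply/val_inj => /=; change (Zp_trunc 6).+2 with 6%N. by rewrite modnDm. Qed.

Definition negw (e : seq bool) (x : nw) : nw :=
  let: (a,b,c,d) := x in
  let f k v := if nth false e k then ((6 - v) %% 6)%N else v in (f 0 a, f 1 b, f 2 c, f 3 d).
Definition cplist : seq nw := [:: (0,0,0,0); (0,2,2,2); (0,4,4,4); (2,0,2,4); (2,2,4,0);
       (2,4,0,2); (4,0,4,2); (4,2,0,4); (4,4,2,0)].
Definition add3 (x : nw) : nw :=
  let: (a,b,c,d) := x in ((3+a)%%6,(3+b)%%6,(3+c)%%6,(3+d)%%6)%N.
Definition c0list := cplist ++ map add3 cplist.

Lemma negW e x i : bnd x ->
  toW (negw e x) i = if nth false e i then (- toW x i)%R else toW x i.
Proof.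
case: x => [[[a b] c] d] /and4P [Ha Hb Hc Hd].
rewrite !toWE.
case: i => [[|[|[|[|//]]]] Hi] /=; case: (nth false e _) => //; exact/esym/negZ.
Qed.

Lemma add3W y : [ffun i => w4 3 3 3 3 i + toW y i]%R = toW (add3 y).
Proof.
case: y => [[[a b] c] d].
apply/ffunP => i; rewrite ffunE !toWE /w4 ffunE addZ.
case: i => [[|[|[|[|//]]]] Hi] /=; apply/val_inj => /=;
  change (Zp_trunc 6).+2 with 6%N; by rewrite modn_mod.
Qed.

Lemma Cp_mem w : (w \in Cp) = (w \in map toW cplist).
Proof. by rewrite /Cp !inE /= -!orbA. Qed.

Lemma C0_mem w : reflect (exists2 y, y \in c0list & w = toW y) (w \in C0).
Proof.
rewrite /C0 inE; apply: (iffP orP).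
  case=> [|/imsetP [c]]; first by rewrite Cp_mem => /mapP [y Hy ->]; exists y => //; rewrite mem_cat Hy.
  rewrite Cp_mem => /mapP [y Hy ->] ->; rewrite add3W; exists (add3 y) => //.
  by rewrite mem_cat map_f ?orbT.
move=> [y]; rewrite mem_cat => /orP [Hy ->|/mapP [y' Hy' ->] ->].
  by left; rewrite Cp_mem map_f.
right; rewrite -add3W; apply/imsetP; exists (toW y') => //.
by rewrite Cp_mem map_f.
Qed.

Fixpoint cl (k : nat) : seq nw -> seq (seq nw) :=
  match k with
  | 0 => fun _ => [:: [::]]
  | k'.+1 => fix clk L := match L with
      | [::] => [::]
      | x :: L' => if (size L < k'.+1)%N then [::] else
           map (cons x) (cl k' (filter (rr x) L')) ++ clk L'
      end
  end.

Lemma cl_complete k L S : subseq S L -> size S = k -> pairwise rr S -> S \in cl k L.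
Proof.
elim: k L S => [|k IHk] L S.
  by case: S => //= _ _ _; rewrite inE.
elim: L S => [|x L IHL] S; first by move/eqP=> -> .
move=> Hsub Hsz Hpw /=.
have Hle : (size S <= size (x :: L))%N by apply: size_subseq.
rewrite ltnNge -Hsz Hle /= mem_cat.
case: S Hsub Hsz Hpw Hle => [//|y S] /= Hsub [Hsz] /andP [Hall Hpw] _.
case: eqP Hsub => [E Hsub|ne Hsub].
  subst y; apply/orP; left; apply: map_f; apply: IHk => //.
  by rewrite subseq_filter Hall Hsub.
apply/orP; right; have := IHL (y :: S) Hsub; rewrite /= Hsz Hall Hpw.
by apply.
Qed.

Lemma pw_of (s : seq nw) : uniq s -> {in s &, forall x y, x != y -> rr x y} -> pairwise rr s.
Proof.
elim: s => //= x s IH /andP [nx us] H; apply/andP; split.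
  apply/allP => y ys; apply: H; rewrite ?inE ?eqxx ?ys ?orbT //.
  by apply/eqP => E; rewrite E ys in nx.
by apply: IH => // a b a_s b_s; apply: H; rewrite inE ?a_s ?b_s orbT.
Qed.

Lemma subseq_head (T : eqType) (z : T) s t :
  subseq s (z :: t) -> z \in s -> z \notin t -> exists2 s', s = z :: s' & subseq s' t.
Proof.
case: s => [//|y s] /=.
case: eqP => [-> H _ _|ne H]; first by exists s.
rewrite inE => /orP [/eqP zy|zs]; first by rewrite zy in ne.
by move/negP; case; apply: (mem_subseq H); rewrite inE zs orbT.
Qed.

Definition fst4 (x : nw) : nat := let: (a,_,_,_) := x in a.
Definition TT (k : nat) (x : nw) : bool := (fst4 x %/ 2 == k).
Definition z0 : nw := (0,0,0,0)%N.
Definition code (x : nw) : nat := let: (a,b,c,d) := x in (((a * 6 + b) * 6 + c) * 6 + d)%N.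
Definition ltc (x y : nw) : bool := (code x < code y)%N.

Lemma sorted_allw : sorted ltc allw.
Proof. vm_compute. reflexivity. Qed.

Lemma uniq_allw : uniq allw.
Proof.
have tr : transitive ltc by move=> y x z; apply: ltn_trans.
have irr : irreflexive ltc by move=> x; apply: ltnn.
exact: (sorted_uniq tr irr sorted_allw).
Qed.

Definition hc (a b : nat) : nat := if odd a then ((a + 6 - b) %% 6)%N else ((b + 6 - a) %% 6)%N.
Definition hh (x y : nw) : nw :=
  let: (a,b,c,d) := x in let: (a',b',c',d') := y in
  (hc a a', ((b' + 6 - b) %% 6)%N, ((c' + 6 - c) %% 6)%N, ((d' + 6 - d) %% 6)%N).

Definition N0 : seq nw := [seq w <- behead allw | TT 0 w && rr z0 w].

Lemma no7 : cl 6 N0 = [::].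
Proof. vm_compute. reflexivity. Qed.

Lemma bf_hc : all (fun a => all (fun b => all (fun c =>
   (l1n (hc a b) (hc a c) == l1n b c) &&
   (l1n ((b + 6 - a) %% 6) ((c + 6 - a) %% 6) == l1n b c) &&
   ((a %/ 2 == b %/ 2) ==> (hc a b %/ 2 == 0)))
   (iota 0 6)) (iota 0 6)) (iota 0 6).
Proof. vm_compute. reflexivity. Qed.

Lemma bf3 a b c : (a < 6)%N -> (b < 6)%N -> (c < 6)%N ->
  [/\ l1n (hc a b) (hc a c) = l1n b c,
      l1n ((b + 6 - a) %% 6) ((c + 6 - a) %% 6) = l1n b c &
      (a %/ 2 == b %/ 2) ==> (hc a b %/ 2 == 0)]%N.
Proof.
move=> Ha Hb Hc.
have mi t : (t < 6)%N -> t \in iota 0 6 by rewrite mem_iota.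
move: (allP (allP (allP bf_hc a (mi a Ha)) b (mi b Hb)) c (mi c Hc)).
by case/andP => /andP [/eqP -> /eqP ->] ->.
Qed.

Lemma l1n_refl a : l1n a a = 0%N.
Proof. by rewrite /l1n leqnn subnn. Qed.

Lemma rr_irr y : rr y y = false.
Proof. by case: y => [[[a b] c] d]; rewrite /rr /= !l1n_refl. Qed.

Lemma hh_rr x y y' : bnd x -> bnd y -> bnd y' -> rr (hh x y) (hh x y') = rr y y'.
Proof.
case: x => [[[a b] c] d] /and4P [Ha Hb Hc Hd].
case: y => [[[a1 b1] c1] d1] /and4P [Ha1 Hb1 Hc1 Hd1].
case: y' => [[[a2 b2] c2] d2] /and4P [Ha2 Hb2 Hc2 Hd2].
rewrite /rr /=.
case: (bf3 Ha Ha1 Ha2) => -> _ _.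
case: (bf3 Hb Hb1 Hb2) => _ -> _.
case: (bf3 Hc Hc1 Hc2) => _ -> _.
by case: (bf3 Hd Hd1 Hd2) => _ -> _.
Qed.

Lemma hh_self x : bnd x -> hh x x = z0.
Proof.
case: x => [[[a b] c] d] _.
by rewrite /hh /hc !addKn !modnn; case: (odd a).
Qed.

Lemma hh_bnd x y : bnd (hh x y).
Proof.
case: x => [[[a b] c] d]; case: y => [[[a1 b1] c1] d1].
by rewrite /bnd /hh /hc !ltn_pmod //; case: (odd a); rewrite ltn_pmod.
Qed.

Lemma hh_T k x y : bnd x -> bnd y -> TT k x -> TT k y -> TT 0 (hh x y).
Proof.
case: x => [[[a b] c] d] /and4P [Ha Hb Hc Hd].
case: y => [[[a1 b1] c1] d1] /and4P [Ha1 Hb1 Hc1 Hd1].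
rewrite /TT /= => /eqP Ex /eqP Ey.
case: (bf3 Ha Ha1 Ha1) => _ _ /implyP; apply; by rewrite Ex Ey.
Qed.

Lemma allw_z : allw = z0 :: behead allw.
Proof. vm_compute. reflexivity. Qed.

Lemma behead_spec : uniq (behead allw) /\ forall w, (w \in behead allw) = bnd w && (w != z0).
Proof.
have E := allw_z; have U := uniq_allw; have B := allw_bnd.
move: (behead allw) E U B => t E; rewrite E => /andP [nz ut] B; split => // w.
rewrite -B inE; case: (w =P z0) => [->|ne]; first by rewrite (negbTE nz).
by case: (w \in t).
Qed.

Lemma N0_spec : [/\ uniq N0, forall w, (w \in N0) = [&& TT 0 w, rr z0 w, bnd w & w != z0]
   & cl 6 N0 = [::]].
Proof.
case: behead_spec => ub mb; split; last exact: no7.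
  exact: filter_uniq.
move=> w; rewrite mem_filter mb -andbA; reflexivity.
Qed.

Lemma le6_gen (N0 : seq nw) k (F : seq nw) :
  uniq N0 -> (forall w, (w \in N0) = [&& TT 0 w, rr z0 w, bnd w & w != z0]) -> cl 6 N0 = [::] ->
  uniq F -> (forall y, y \in F -> bnd y && TT k y) ->
  {in F &, forall x y, x != y -> rr x y} -> (size F <= 6)%N.
Proof.
move=> uN memN no7 uF HF Hd; rewrite leqNgt; apply/negP => H7.
have [x xF] : exists x, x \in F by case: F {uF HF Hd} H7 => // x ? _; exists x; rewrite inE eqxx.
have [bx Tx] := andP (HF x xF).
have bF y : y \in F -> bnd y by move/HF/andP => [].
have hinj y y' : y \in F -> y' \in F -> hh x y = hh x y' -> y = y'.
  move=> yF y'F E; apply/eqP; apply/negPn/negP => ne.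
  by move: (Hd _ _ yF y'F ne); rewrite -(hh_rr bx (bF _ yF) (bF _ y'F)) E rr_irr.
pose M := map (hh x) F.
have uM : uniq M by rewrite map_inj_in_uniq // => y y'; apply: hinj.
have z0M : z0 \in M by rewrite -(hh_self bx); apply: map_f.
pose M' := rem z0 M.
have M'N : {subset M' <= N0}.
  move=> w; rewrite (mem_rem_uniq _ uM) inE => /andP [wz /mapP [y yF Ew]].
  rewrite memN wz andbT; apply/and3P; split.
  - by rewrite Ew; apply: (hh_T bx (bF _ yF) Tx); case/andP: (HF y yF).
  - rewrite -(hh_self bx) Ew (hh_rr bx bx (bF _ yF)); apply: Hd => //.
    by apply/eqP => E; move: wz; rewrite Ew -E hh_self // eqxx.
  - by rewrite Ew hh_bnd.
pose G := take 6 (filter (mem M') N0).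
have sG : subseq G N0 by apply: subseq_trans (take_subseq _ _) (filter_subseq _ _).
have szG : size G = 6%N.
  rewrite size_takel //.
  have P : perm_eq (filter (mem M') N0) M'.
    apply: uniq_perm; [exact: filter_uniq|exact: rem_uniq|].
    by move=> w; rewrite mem_filter; apply/andP/idP => [[]//|wM]; split => //; apply: M'N.
  by rewrite (perm_size P) size_rem // size_map -ltnS (ltn_predK H7).
have : G \in cl 6 N0.
  apply: (cl_complete sG szG); apply: pw_of; first exact: subseq_uniq sG uN.
  move=> w1 w2 w1G w2G ne.
  have : w1 \in M by apply: (mem_subseq (rem_subseq z0 M)); move: w1G => /(mem_subseq (take_subseq _ _)); rewrite mem_filter => /andP [].
  have : w2 \in M by apply: (mem_subseq (rem_subseq z0 M)); move: w2G => /(mem_subseq (take_subseq _ _)); rewrite mem_filter => /andP [].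
  move=> /mapP [y2 y2F E2] /mapP [y1 y1F E1]; subst w1 w2.
  rewrite hh_rr ?bF //; apply: Hd => //.
  by apply/eqP => E; move: ne; rewrite E eqxx.
by rewrite no7.
Qed.

Lemma le6 k (F : seq nw) : uniq F -> (forall y, y \in F -> bnd y && TT k y) ->
  {in F &, forall x y, x != y -> rr x y} -> (size F <= 6)%N.
Proof. move=> uF HF Hd; case: N0_spec => u m n; exact: (le6_gen u m n uF HF Hd). Qed.

Definition allE : seq (seq bool) := [:: [:: false; false; false; false]; [:: false; false; false; true]; [:: false; false; true; false]; [:: false; false; true; true]; [:: false; true; false; false]; [:: false; true; false; true]; [:: false; true; true; false]; [:: false; true; true; true]; [:: true; false; false; false]; [:: true; false; false; true]; [:: true; false; true; false]; [:: true; false; true; true]; [:: true; true; false; false]; [:: true; true; false; true]; [:: true; true; true; false]; [:: true; true; true; true]].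
Definition good (s : seq nw) : bool := has (fun e : seq bool => perm_eq (map (negw e) s) c0list) allE.
Definition L0 := [seq w <- behead allw | TT 0 w && rr z0 w].
Definition Lk k (P : seq nw) := [seq w <- allw | TT k w && all (fun y => rr y w) P].
Definition L2f (k1 : seq nw) (L2 : seq nw) := [seq w <- L2 | all (fun y => rr y w) k1].
Definition step2 k0 L2 k1 := all (fun k2 => good (z0 :: k0 ++ k1 ++ k2)) (cl 6 (L2f k1 L2)).
Definition step1 k0 L1 L2 := all (step2 k0 L2) (cl 6 L1).
Definition bigcheck : bool :=
  all (fun k0 => step1 k0 (Lk 1 (z0 :: k0)) (Lk 2 (z0 :: k0))) (cl 5 L0).
Lemma bigcheckT : bigcheck.
Proof. vm_compute. reflexivity. Qed.

Lemma cover : all (fun x => TT 0 x || TT 1 x || TT 2 x) allw.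
Proof. vm_compute. reflexivity. Qed.

Lemma size3 s : all (fun x => TT 0 x || TT 1 x || TT 2 x) s ->
  size s = (count (TT 0) s + count (TT 1) s + count (TT 2) s)%N.
Proof.
elim: s => //= x s IH /andP [Hx /IH ->]; move: Hx; rewrite /TT.
case: (fst4 x %/ 2)%N => [|[|[|n]]] //= _; lia.
Qed.

Lemma z0_nb : z0 \notin behead allw.
Proof. by case: behead_spec => _ ->; rewrite eqxx andbF. Qed.

Opaque Lk L0 cl allw L2f.
Theorem part3 (C : {set word 6 4}) : #|C| = 18%N -> min_lee_ge C 6 -> lee_equiv C C0.
Proof.
move=> HC Hd.
have [u0 u0C] : exists u0, u0 \in C by apply/card_gt0P; rewrite HC.
pose tr (u : word 6 4) : word 6 4 := [ffun i => u i - u0 i]%R.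
have tr_inj : injective tr.
  move=> u v /ffunP E; apply/ffunP => i; move: (E i); rewrite !ffunE; exact: addIr.
pose C1 := [set tr u | u in C].
have HC1 : #|C1| = 18%N by rewrite card_imset.
have Hd1 : min_lee_ge C1 6.
  move=> u' v' /imsetP [u uC ->] /imsetP [v vC ->] ne.
  have -> : lee_dist (tr u) (tr v) = lee_dist u v.
    by apply: eq_bigr => i _; rewrite !ffunE lee1_tr.
  by apply: Hd => //; apply/eqP => E; rewrite E eqxx in ne.
have [S [memS uS sS0]] : exists S : seq nw,
    [/\ forall x, (x \in S) = bnd x && (toW x \in C1), uniq S & subseq S allw].
  exists [seq x <- allw | toW x \in C1]; split.
  - by move=> x; rewrite mem_filter allw_bnd andbC.
  - exact: filter_uniq _ uniq_allw.
  - exact: filter_subseq.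
have sS := sS0.
have rS x y : x \in S -> y \in S -> x != y -> rr x y.
  rewrite !memS => /andP [bx xC] /andP [byy yC] ne; rewrite /rr -ld_ok //; apply: Hd1 => //.
  by apply/eqP => /toW_inj E; rewrite E ?eqxx in ne.
have szS : size S = 18%N.
  have Hu : uniq (map toW S).
    rewrite map_inj_in_uniq // => x y; rewrite !memS => /andP [bx _] /andP [byy _]; exact: toW_inj.
  rewrite -HC1 -(size_map toW) -(card_uniqP Hu); apply: eq_card => w.
  apply/mapP/idP => [[x]|wC]; first by rewrite memS => /andP [_ ?] ->.
  by exists (ofW w); rewrite ?toWK // memS ofW_bnd toWK.
have z0S : z0 \in S.
  have Hz : toW z0 = tr u0.
    apply/ffunP => i; rewrite toWE !ffunE subrr.
    by case: i => [[|[|[|[|//]]]] Hi]; apply/val_inj.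
  by rewrite memS Hz imset_f.
rewrite allw_z in sS.
have [S' ES HS'] := subseq_head sS z0S z0_nb.
have fT k (s : seq nw) x : x \in filter (TT k) s -> TT k x by rewrite mem_filter => /andP [].
have fS k (s : seq nw) x : x \in filter (TT k) s -> x \in s by rewrite mem_filter => /andP [].
have cnt k : (count (TT k) S <= 6)%N.
  rewrite -size_filter; apply: (le6 (k:=k)).
  - exact: filter_uniq.
  - move=> y1 yF; rewrite (fT _ _ _ yF) andbT; move: (fS _ _ _ yF); rewrite memS; by case/andP.
  - by move=> x y /fS xS /fS yS; apply: rS.
have cov : all (fun x => TT 0 x || TT 1 x || TT 2 x) S.
  apply/allP => x xS; apply: (allP cover); exact: (mem_subseq sS0 xS).
move: (size3 cov); rewrite szS => E18.
have c0 := cnt 0%N; have c1 := cnt 1%N; have c2 := cnt 2%N.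
have e0 : count (TT 0) S = 6%N by lia.
have e1 : count (TT 1) S = 6%N by lia.
have e2 : count (TT 2) S = 6%N by lia.
pose K0 := filter (TT 0) S'.
pose K1 := filter (TT 1) S.
pose K2 := filter (TT 2) S.
have EK0 : filter (TT 0) S = z0 :: K0 by rewrite ES.
have sK0 : size K0 = 5%N by move: e0; rewrite -size_filter EK0 => -[].
have inS' x : x \in S' -> x \in S by rewrite ES inE => ->; rewrite orbT.
have uS' : uniq S' by move: uS; rewrite ES => /andP [].
have K0S x : x \in K0 -> x \in S by move/fS/inS'.
have K1S x : x \in K1 -> x \in S by move/fS.
have K2S x : x \in K2 -> x \in S by move/fS.
have pK (K : seq nw) : uniq K -> {subset K <= S} -> pairwise rr K.
  by move=> uK sK; apply: pw_of => // x y /sK xS /sK yS; apply: rS.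
have TTne x y k l : TT k x -> TT l y -> k != l -> y != x.
  move=> /eqP Hx /eqP Hy kl; apply/eqP => E; subst; by rewrite eqxx in kl.
have HK0 : K0 \in cl 5 L0.
  apply: (@cl_complete 5 L0 K0) => //; last by apply: pK => //; apply: filter_uniq.
  rewrite subseq_filter (subseq_trans (filter_subseq _ _) HS') andbT.
  apply/allP => x xK; have xS' := fS _ _ _ xK; rewrite (fT _ _ _ xK) /=.
  apply: rS => //; first by apply: inS'.
  by apply/eqP => E; move: z0_nb; rewrite E (mem_subseq HS' xS').
have HK1 : K1 \in cl 6 (Lk 1 (z0 :: K0)).
  apply: (@cl_complete 6 (Lk 1 (z0 :: K0)) K1).
  2: { rewrite size_filter. exact: e1. }
  2: { apply: pK. apply: filter_uniq. exact: uS. exact: K1S. }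
    rewrite subseq_filter (subseq_trans (filter_subseq _ _) sS0) andbT.
    apply/allP => x xK; have xS := K1S x xK.
    apply/andP; split; first exact: fT _ _ _ xK.
    apply/allP => y yK.
    have yS : y \in S by move: yK; rewrite inE => /orP [/eqP ->|/K0S].
    have Ty : TT 0 y by move: yK; rewrite inE => /orP [/eqP ->|/fT].
    exact: (rS y x yS xS (TTne x y 1%N 0%N (fT _ _ _ xK) Ty erefl)).
have HK2 : K2 \in cl 6 (L2f K1 (Lk 2 (z0 :: K0))).
  apply: (@cl_complete 6 (L2f K1 (Lk 2 (z0 :: K0))) K2).
  2: { rewrite size_filter. exact: e2. }
  2: { apply: pK. apply: filter_uniq. exact: uS. exact: K2S. }
    rewrite subseq_filter subseq_filter (subseq_trans (filter_subseq _ _) sS0) andbT.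
    have Tx0 x : x \in K2 -> TT 2 x by move/fT.
    apply/andP; split.
      apply/allP => x xK; have xS := K2S x xK.
      apply/allP => y yK; have yS := K1S y yK.
      exact: (rS y x yS xS (TTne x y 2%N 1%N (Tx0 x xK) (fT _ _ _ yK) erefl)).
    apply/allP => x xK; have xS := K2S x xK.
    apply/andP; split; first exact: Tx0 x xK.
    apply/allP => y yK.
    have [yS Ty] : y \in S /\ TT 0 y.
      rewrite inE in yK; case/orP: yK => [/eqP -> | yK].
      - by split; [exact: z0S|].
      - by split; [exact: K0S y yK|rewrite (fT _ _ _ yK)].
    exact: (rS y x yS xS (TTne x y 2%N 0%N (Tx0 x xK) Ty erefl)).
have Hgood : good (z0 :: K0 ++ K1 ++ K2).
  move: bigcheckT => /allP /(_ _ HK0); rewrite /step1 => /allP /(_ _ HK1).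
  by rewrite /step2 => /allP /(_ _ HK2).
pose sol := z0 :: K0 ++ K1 ++ K2.
have memsol x : (x \in sol) = (x \in S).
  apply/idP/idP.
    rewrite /sol inE !mem_cat => /orP [/eqP ->//|/orP [/K0S//|/orP [/K1S//|/K2S//]]].
  move=> xS; have := allP cov x xS; rewrite /sol inE !mem_cat.
  case/orP => [/orP [] T|T].
  - have : x \in filter (TT 0) S by rewrite mem_filter T.
    by rewrite EK0 inE => /orP [->|->]; rewrite ?orbT.
  - have xK : x \in K1 by rewrite mem_filter T xS.
    by rewrite xK !orbT.
  - have xK : x \in K2 by rewrite mem_filter T xS.
    by rewrite xK !orbT.
case/hasP: Hgood => e _ Hperm.
exists 1%g, [ffun i : 'I_4 => nth false e i],
  [ffun i : 'I_4 => if nth false e i then u0 i else (- u0 i)%R].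
have key u : lee_act 1%g [ffun i : 'I_4 => nth false e i]
    [ffun i : 'I_4 => if nth false e i then u0 i else (- u0 i)%R] u
  = toW (negw e (ofW (tr u))).
  apply/ffunP => i; rewrite negW; last exact: ofW_bnd.
  rewrite toWK !ffunE perm1.
  case: (nth false e i).
    rewrite opprB addrC; reflexivity.
  reflexivity.
apply/setP => w; apply/imsetP/C0_mem.
  case=> u uC ->; exists (negw e (ofW (tr u))); last exact: key.
  rewrite -(perm_mem Hperm); apply: map_f; rewrite memsol memS ofW_bnd toWK.
  exact: imset_f.
case=> y; rewrite -(perm_mem Hperm) => /mapP [x xsol ->] ->.
move: xsol; rewrite memsol memS => /andP [bx /imsetP [u uC E]].
exists u; first exact: uC.
rewrite key -E (ofWK bx); reflexivity.
Qed.

Lemma c0_ok : all bnd c0list && uniq c0list.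
Proof. vm_compute. reflexivity. Qed.

Lemma c0_dist : all (fun x => all (fun y => (x == y) || rr x y) c0list) c0list.
Proof. vm_compute. reflexivity. Qed.

Lemma part1 : #|C0| = 18%N.
Proof.
case/andP: c0_ok => /allP Hb Hu.
have Hu' : uniq (map toW c0list).
  rewrite map_inj_in_uniq // => x y xc yc; exact: toW_inj (Hb x xc) (Hb y yc).
have E : #|C0| = #|[seq toW i | i <- c0list]|.
  apply: eq_card => w; apply/C0_mem/mapP => [[y yc ->]|[y yc ->]]; by exists y.
by rewrite E (card_uniqP Hu') size_map.
Qed.

Lemma part2 : min_lee_ge C0 6.
Proof.
case/andP: c0_ok => /allP Hb _.
move=> u v /C0_mem [x xc ->] /C0_mem [y yc ->] ne.
rewrite ld_ok ?Hb //.
move: (allP (allP c0_dist x xc) y yc) => /orP [/eqP E|//].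
by rewrite E eqxx in ne.
Qed.

Theorem mainTheorem15 :
  #|C0| = 18%N /\ min_lee_ge C0 6 /\
  (forall C : {set word 6 4}, #|C| = 18%N -> min_lee_ge C 6 -> lee_equiv C C0).
Proof. split; first exact: part1. split; first exact: part2. exact: part3. Qed.
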